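(* Let $\mathbf X=(X_1,\dots,X_n)$ and $\mathbf Y=(Y_1,\dots,Y_m)$ be variables and let $\mathcal A$ be the unital complex algebra generated by $\mathbf X,\mathbf Y$ subject only to the relations $[X_i,Y_j]=0$ for all $i,j$ (i.e. $\mathbb C\langle\mathbf X,\mathbf Y\rangle$ modulo the two-sided ideal generated by these commutators). Define $\Theta_{(1,2)}:\mathcal A\otimes\mathcal A\to\mathcal A\otimes\mathcal A$ by $\Theta_{(1,2)}(Z_1\otimes Z_2)=Z_2\otimes Z_1$, and equip $\mathcal A\otimes\mathcal A$ with the multiplication $(Z_1\otimes Z_2)(W_1\otimes W_2)=Z_1W_1\otimes Z_2W_2$. For each $i$ let $\partial_{\ell,X_i}$ be the left bi-free difference quotient of $X_i$ with respect to $(\mathbb C\langle\hat{\mathbf X}_i\rangle,\mathbb C\langle\mathbf Y\rangle)$ and for each $j$ let $\partial_{r,Y_j}$ be the right bi-free difference quotient of $Y_j$ with respect to $(\mathbb C\langle\mathbf X\rangle,\mathbb C\langle\hat{\mathbf Y}_j\rangle)$. Then for every $P\in\mathcal A$, \[ \sum_{i=1}^n\Big(\partial_{\ell,X_i}(P)(X_i\otimes1)-(1\otimes X_i)\partial_{\ell,X_i}(P)\Big)-\Theta_{(1,2)}\Big(\sum_{j=1}^m\big(\partial_{r,Y_j}(P)(Y_j\otimes1)-(1\otimes Y_j)\partial_{r,Y_j}(P)\big)\Big)=P\otimes1-1\otimes P. \] In particular, if $P\in\mathcal A$ satisfies $\partial_{\ell,X_i}(P)=0$ and $\partial_{r,Y_j}(P)=0$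 for all $i,j$, then $P$ is a scalar multiple of $1$.
   Context: $\hat{\mathbf X}_i$ denotes $(X_1,\dots,X_{i-1},X_{i+1},\dots,X_n)$, similarly $\hat{\mathbf Y}_j$. Bi-free difference quotients: let $L$ (''left letters'') and $R$ (''right letters'') be sets of generators. For $X\in L$ and a word $Z_1\cdots Z_k$ with each $Z_p\in L\cup R$, $\partial_{\ell,X}(Z_1\cdots Z_k)=\sum_{q:\,Z_q=X}\Big(Z_1\cdots Z_{q-1}\prod_{p>q,\,Z_p\in R}Z_p\Big)\otimes\prod_{p>q,\,Z_p\in L}Z_p$, and for $Y\in R$, $\partial_{r,Y}(Z_1\cdots Z_k)=\sum_{q:\,Z_q=Y}\Big(Z_1\cdots Z_{q-1}\prod_{p>q,\,Z_p\in L}Z_p\Big)\otimes\prod_{p>q,\,Z_p\in R}Z_p$, where all products are taken in increasing order of index (empty product $=1$), extended linearly. ''With respect to $(B_\ell,B_r)$'' means the left letters are $X$ together with elements of $B_\ell$ (here the other $X$'s) and the right letters are elements of $B_r$ (here the $Y$'s), and analogously on the right. These maps are well defined on $\mathcal A$ since they respect commutation of left letters with right letters. *)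

(* Defs.v *)
From HB Require Import structures.
From mathcomp Require Import all_boot all_order all_algebra.
From mathcomp Require Import complex.
From mathcomp Require Import reals.

Set Implicit Arguments.
Unset Strict Implicit.
Unset Printing Implicit Defensive.
Import Order.TTheory GRing.Theory Num.Theory.
Local Open Scope ring_scope.

Section BiFree.
Variables (K : fieldType) (n m : nat).

(* Letters: inl i is X_i (a "left" letter), inr j is Y_j (a "right" letter). *)
Definition letter := ('I_n + 'I_m)%type.
Definition word := seq letter.
Definition isL (z : letter) : bool := if z is inl _ then true else false.
Definition isR (z : letter) : bool := if z is inr _ then true else false.

(* Elements of the free algebra K<X,Y>: finite formal linear combinations of
   words (a list of (coefficient, word) pairs, summed). *)
Definition fa := seq (K * word).
(* Elements of K<X,Y> (x) K<X,Y>: formal combinations of pairs of words. *)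
Definition ften := seq (K * (word * word)).

Definition fa_coef (p : fa) (w : word) : K :=
  \sum_(t <- p) (t.2 == w)%:R * t.1.
Definition ften_coef (s : ften) (w : word * word) : K :=
  \sum_(t <- s) (t.2 == w)%:R * t.1.

Definition fa_scale (c : K) (p : fa) : fa := [seq (c * t.1, t.2) | t <- p].
Definition fa_mul (p q : fa) : fa :=
  [seq (a.1 * b.1, a.2 ++ b.2) | a <- p, b <- q].
Definition ften_scale (c : K) (s : ften) : ften := [seq (c * t.1, t.2) | t <- s].
Definition ften_add (s t : ften) : ften := s ++ t.
Definition ften_sub (s t : ften) : ften := s ++ ften_scale (-1) t.
Definition ften_mul (s t : ften) : ften :=
  [seq (a.1 * b.1, (a.2.1 ++ b.2.1, a.2.2 ++ b.2.2)) | a <- s, b <- t].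
Definition Theta12 (s : ften) : ften := [seq (t.1, (t.2.2, t.2.1)) | t <- s].

Definition fa_one : fa := [:: (1, [::])].
Definition ften_simple (u v : word) : ften := [:: (1, (u, v))].
Definition ten1 (p : fa) : ften := [seq (t.1, (t.2, [::])) | t <- p].
Definition one_ten (p : fa) : ften := [seq (t.1, ([::], t.2)) | t <- p].

Definition comm (i : 'I_n) (j : 'I_m) : fa :=
  [:: (1, [:: inl i; inr j]); (-1, [:: inr j; inl i])].
(* generator data (c, u, (i,j), v) stands for c * u [X_i,Y_j] v *)
Definition ideal_gen (g : K * word * ('I_n * 'I_m) * word) : fa :=
  let: (c, u, ij, v) := g in
  fa_scale c (fa_mul [:: (1, u)] (fa_mul (comm ij.1 ij.2) [:: (1, v)])).
(* Equality in A = K<X,Y> / I *)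
Definition A_eq (p q : fa) : Prop :=
  exists g : seq (K * word * ('I_n * 'I_m) * word),
    forall w, fa_coef p w - fa_coef q w = fa_coef (flatten (map ideal_gen g)) w.

(* Equality in A (x) A = (F (x) F) / (I (x) F + F (x) I):
   data (g, w, b) stands for g (x) w if b, and w (x) g otherwise. *)
Definition tideal_gen (h : K * word * ('I_n * 'I_m) * word * word * bool) : ften :=
  let: (c, u, ij, v, w, b) := h in
  let e := ideal_gen (c, u, ij, v) in
  if b then [seq (t.1, (t.2, w)) | t <- e] else [seq (t.1, (w, t.2)) | t <- e].
Definition AA_eq (s t : ften) : Prop :=
  exists g : seq (K * word * ('I_n * 'I_m) * word * word * bool),
    forall w, ften_coef s w - ften_coef t w
              = ften_coef (flatten (map tideal_gen g)) w.

(* Left bi-free difference quotient of X_i w.r.t. (K<hat X_i>, K<Y>):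
   left letters = all X's, right letters = all Y's. *)
Definition dl_word (i : 'I_n) (w : word) : ften :=
  [seq (1, (take q w ++ filter isR (drop q.+1 w), filter isL (drop q.+1 w)))
  | q <- iota 0 (size w) & nth (inl i) w q == inl i].
(* Right bi-free difference quotient of Y_j w.r.t. (K<X>, K<hat Y_j>). *)
Definition dr_word (j : 'I_m) (w : word) : ften :=
  [seq (1, (take q w ++ filter isL (drop q.+1 w), filter isR (drop q.+1 w)))
  | q <- iota 0 (size w) & nth (inr j) w q == inr j].

Definition dl (i : 'I_n) (p : fa) : ften :=
  flatten [seq ften_scale t.1 (dl_word i t.2) | t <- p].
Definition dr (j : 'I_m) (p : fa) : ften :=
  flatten [seq ften_scale t.1 (dr_word j t.2) | t <- p].


Definition left_part (p : fa) : ften :=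
  flatten [seq ften_sub (ften_mul (dl i p) (ften_simple [:: inl i] [::]))
                        (ften_mul (ften_simple [::] [:: inl i]) (dl i p))
          | i <- enum 'I_n].
Definition right_part (p : fa) : ften :=
  flatten [seq ften_sub (ften_mul (dr j p) (ften_simple [:: inr j] [::]))
                        (ften_mul (ften_simple [::] [:: inr j]) (dr j p))
          | j <- enum 'I_m].

End BiFree.

(* Main.v *)
Require Import Defs.
From HB Require Import structures.
From mathcomp Require Import all_boot all_order all_algebra.
From mathcomp Require Import complex.
From mathcomp Require Import reals.
From mathcomp Require Import ring.
Import GRing.Theory.
Local Open Scope ring_scope.
Set Implicit Arguments.
Unset Strict Implicit.

Section Proof.
Variables (K : fieldType) (n m : nat).
Local Notation word := (word n m).
Local Notation key := (word * word)%type.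
Local Notation ften := (ften K n m).
Local Notation gen := (K * word * ('I_n * 'I_m) * word * word * bool)%type.

Definition ev (F : key -> K) (s : ften) : K := \sum_(t <- s) F t.2 * t.1.
Definition dlt (k w : key) : K := (k == w)%:R.

Lemma coef_ev s w : ften_coef s w = ev (dlt^~ w) s.
Proof. by []. Qed.

Lemma ev_cat F s t : ev F (s ++ t) = ev F s + ev F t.
Proof. by rewrite /ev big_cat. Qed.

Lemma ev_nil F : ev F [::] = 0.
Proof. by rewrite /ev big_nil. Qed.

Lemma ev_scale F c s : ev F (ften_scale c s) = c * ev F s.
Proof.
rewrite /ev /ften_scale big_map big_distrr; apply: eq_bigr => t _ /=.
by rewrite mulrCA.
Qed.

Lemma ev_sub F s t : ev F (ften_sub s t) = ev F s - ev F t.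
Proof. by rewrite /ften_sub ev_cat ev_scale mulN1r. Qed.

Lemma ev_flatten F (ss : seq ften) : ev F (flatten ss) = \sum_(s <- ss) ev F s.
Proof. by rewrite /ev big_flatten. Qed.

Lemma ev_rmul F s a b :
  ev F (ften_mul s (ften_simple K a b)) = ev (fun k => F (k.1 ++ a, k.2 ++ b)) s.
Proof.
rewrite /ev /ften_mul /ften_simple.
elim: s => [|t s IH]; first by rewrite !big_nil.
by rewrite /= !big_cons IH mulr1.
Qed.

Lemma ev_lmul F s a b :
  ev F (ften_mul (ften_simple K a b) s) = ev (fun k => F (a ++ k.1, b ++ k.2)) s.
Proof.
rewrite /ev /ften_mul /ften_simple /= cats0 big_map.
by apply: eq_bigr => t _; rewrite mul1r.
Qed.

Lemma ev_Theta F s : ev F (Theta12 s) = ev (fun k => F (k.2, k.1)) s.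
Proof. by rewrite /ev /Theta12 big_map. Qed.

Lemma ev_keys F s (S : seq key) : uniq S -> {subset map snd s <= S} ->
  ev F s = \sum_(k <- S) F k * ften_coef s k.
Proof.
move=> uS sub.
rewrite /ften_coef.
under eq_bigr => k _ do rewrite big_distrr.
rewrite exchange_big /ev; apply: eq_big_seq => t ts.
have tS : t.2 \in S by apply: sub; apply: map_f.
rewrite (bigD1_seq t.2) //= eqxx mul1r big1 ?addr0 //.
by move=> k /negbTE kn; rewrite eq_sym kn mul0r mulr0.
Qed.

Lemma ev_coef F s t : (forall k, ften_coef s k = ften_coef t k) -> ev F s = ev F t.
Proof.
move=> h.
have uS := undup_uniq (map snd s ++ map snd t).
rewrite (@ev_keys F s _ uS); last by move=> k ks; rewrite mem_undup mem_cat ks.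
rewrite (@ev_keys F t _ uS); last by move=> k ks; rewrite mem_undup mem_cat ks orbT.
by apply: eq_bigr => k _; rewrite h.
Qed.

Definition pr (b : bool) (x y : word) : key := if b then (x, y) else (y, x).

Definition gvF (F : key -> K) (h : gen) : K :=
  let: (c, u, ij, v, w0, b) := h in
  c * (F (pr b (u ++ inl ij.1 :: inr ij.2 :: v) w0)
       - F (pr b (u ++ inr ij.2 :: inl ij.1 :: v) w0)).

Lemma ev_tgen F h : ev F (tideal_gen h) = gvF F h.
Proof.
case: h => [[[[[c u] [i j]] v] w0] b].
rewrite /tideal_gen /ideal_gen /fa_mul /fa_scale /comm /ev.
case: b => /=; rewrite !big_cons big_nil /=; ring.
Qed.

Definition inI (F : key -> K) :=
  exists g : seq gen, forall w, F w = \sum_(h <- g) gvF (dlt^~ w) h.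

Lemma coef_GI (g : seq gen) w :
  ften_coef (flatten (map (@tideal_gen K n m) g)) w = \sum_(h <- g) gvF (dlt^~ w) h.
Proof.
rewrite coef_ev ev_flatten big_map; apply: eq_bigr => h _; exact: ev_tgen.
Qed.

Lemma inI_ext F G : (forall w, F w = G w) -> inI F -> inI G.
Proof. by move=> e [g hg]; exists g => w; rewrite -e. Qed.

Lemma inI0 : inI (fun _ => 0).
Proof. by exists [::] => w; rewrite big_nil. Qed.

Lemma inID F G : inI F -> inI G -> inI (fun w => F w + G w).
Proof.
by move=> [g1 h1] [g2 h2]; exists (g1 ++ g2) => w; rewrite big_cat h1 h2.
Qed.

Definition gscale (c : K) (h : gen) : gen :=
  let: (c0, u, ij, v, w0, b) := h in (c * c0, u, ij, v, w0, b).

Lemma inIZ c F : inI F -> inI (fun w => c * F w).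
Proof.
move=> [g hg]; exists (map (gscale c) g) => w.
rewrite hg big_map big_distrr; apply: eq_bigr => h _.
by case: h => [[[[[c0 u] ij] v] w0] b] /=; rewrite mulrA.
Qed.

Lemma inIN F : inI F -> inI (fun w => - F w).
Proof.
by move=> h; apply: inI_ext (inIZ (-1) h) => w; rewrite mulN1r.
Qed.

Lemma inIB F G : inI F -> inI G -> inI (fun w => F w - G w).
Proof. by move=> h1 h2; apply: inID h1 (inIN h2). Qed.

Lemma inI_sum (T : eqType) (l : seq T) (F : T -> key -> K) :
  (forall x, x \in l -> inI (F x)) -> inI (fun w => \sum_(x <- l) F x w).
Proof.
elim: l => [|x l IH] h.
  by apply: inI_ext inI0 => w; rewrite big_nil.
apply: inI_ext (inID (h x (mem_head _ _)) (IH _)).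
  by move=> w; rewrite big_cons.
by move=> y yl; apply: h; rewrite inE yl orbT.
Qed.

Definition gswap (h : gen) : gen :=
  let: (c0, u, ij, v, w0, b) := h in (c0, u, ij, v, w0, ~~ b).

Lemma inI_swap F : inI F -> inI (fun w => F (w.2, w.1)).
Proof.
move=> [g hg]; exists (map gswap g) => w.
rewrite hg big_map; apply: eq_bigr => h _.
case: h => [[[[[c0 u] ij] v] w0] b] /=; rewrite /dlt /pr.
by case: b; case: w => w1 w2 /=; rewrite !xpair_eqE ?(andbC (_ == w1)).
Qed.

Lemma inI_push (s : ften) (f : key -> key) (hf : gen -> gen) :
  (forall h F, gvF (fun k => F (f k)) h = gvF F (hf h)) ->
  inI (ften_coef s) -> inI (fun w => ev (fun k => dlt (f k) w) s).
Proof.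
move=> hh [g hg]; exists (map hf g) => w.
rewrite (@ev_coef _ s (flatten (map (@tideal_gen K n m) g))); last first.
  by move=> k; rewrite hg coef_GI.
rewrite ev_flatten !big_map; apply: eq_bigr => h _.
by rewrite ev_tgen; exact: (hh h (dlt^~ w)).
Qed.



Lemma inI_gen b u i j v w0 :
  inI (fun w => dlt (pr b (u ++ inl i :: inr j :: v) w0) w
                - dlt (pr b (u ++ inr j :: inl i :: v) w0) w).
Proof.
by exists [:: (1, u, (i, j), v, w0, b)] => w; rewrite big_cons big_nil /= mul1r addr0.
Qed.

Lemma commL (r : word) : all (@isR n m) r -> forall a v i b w0,
  inI (fun w => dlt (pr b (a ++ r ++ inl i :: v) w0) w
                - dlt (pr b (a ++ inl i :: r ++ v) w0) w).
Proof.
elim: r => [|y r IH] /=.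
  by move=> _ a v i b w0; apply: inI_ext inI0 => w; rewrite subrr.
case: y => // j /IH {}IH a v i b w0.
apply: inI_ext (inID (IH (rcons a (inr j)) v i b w0) (inIN (inI_gen b a i j (r ++ v) w0))).
move=> w; rewrite -!cats1 -!catA /=; ring.
Qed.

Lemma commR (r : word) : all (@isL n m) r -> forall a v j b w0,
  inI (fun w => dlt (pr b (a ++ r ++ inr j :: v) w0) w
                - dlt (pr b (a ++ inr j :: r ++ v) w0) w).
Proof.
elim: r => [|y r IH] /=.
  by move=> _ a v i b w0; apply: inI_ext inI0 => w; rewrite subrr.
case: y => // i /IH {}IH a v j b w0.
apply: inI_ext (inID (IH (rcons a (inl i)) v j b w0) (inI_gen b a i j (r ++ v) w0)).
move=> w; rewrite -!cats1 -!catA /=; ring.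
Qed.


Local Notation Rw u := (filter (@isR n m) u).
Local Notation Lw u := (filter (@isL n m) u).

Lemma ev_dlword G i (u : word) : ev G (dl_word K i u) =
  \sum_(q <- iota 0 (size u) | nth (inl i) u q == inl i)
     G (take q u ++ Rw (drop q.+1 u), Lw (drop q.+1 u)).
Proof. by rewrite /ev /dl_word big_map big_filter; apply: eq_bigr => q _; rewrite mulr1. Qed.

Lemma ev_drword G j (u : word) : ev G (dr_word K j u) =
  \sum_(q <- iota 0 (size u) | nth (inr j) u q == inr j)
     G (take q u ++ Lw (drop q.+1 u), Rw (drop q.+1 u)).
Proof. by rewrite /ev /dr_word big_map big_filter; apply: eq_bigr => q _; rewrite mulr1. Qed.

Definition TL (u : word) (q : nat) (w : key) :=
  \sum_(i <- enum 'I_n) (if nth (inl i) u q == inl i then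
     dlt ((take q u ++ Rw (drop q.+1 u)) ++ [:: inl i], Lw (drop q.+1 u) ++ [::]) w
     - dlt ([::] ++ (take q u ++ Rw (drop q.+1 u)), [:: inl i] ++ Lw (drop q.+1 u)) w
   else 0).

Definition LW (u : word) (w : key) :=
  \sum_(i <- enum 'I_n)
    (ev (fun k => dlt (k.1 ++ [:: inl i], k.2 ++ [::]) w) (dl_word K i u)
     - ev (fun k => dlt ([::] ++ k.1, [:: inl i] ++ k.2) w) (dl_word K i u)).

Lemma LW_TL (u : word) (w : key) : LW u w = \sum_(q <- iota 0 (size u)) TL u q w.
Proof.
rewrite /LW /TL.
under eq_bigr => i _ do rewrite !ev_dlword -sumrB big_mkcond.
by rewrite exchange_big.
Qed.

Lemma TL_eq (u : word) (q : nat) (w : key) (d : letter n m) : (q < size u)%N -> TL u q w =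
  match nth d u q with
  | inl i0 => dlt ((take q u ++ Rw (drop q.+1 u)) ++ [:: inl i0], Lw (drop q.+1 u) ++ [::]) w
     - dlt ([::] ++ (take q u ++ Rw (drop q.+1 u)), [:: inl i0] ++ Lw (drop q.+1 u)) w
  | inr _ => 0 end.
Proof.
move=> hq; rewrite /TL.
under eq_bigr => i _ do rewrite (set_nth_default d _ hq).
case: (nth d u q) => [i0|j0].
  rewrite (bigD1_seq i0) ?mem_enum ?enum_uniq //= eqxx big1 ?addr0 //.
  by move=> i ne; case: eqP => // [[e]]; rewrite e eqxx in ne.
by rewrite big1.
Qed.

Lemma LW_tel (u : word) :
  inI (fun w => LW u w - (dlt (u, [::]) w - dlt (Rw u, Lw u) w)).
Proof.
pose A q w := dlt (take q u ++ Rw (drop q u), Lw (drop q u)) w.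
have tel w : \sum_(q <- iota 0 (size u)) (A q.+1 w - A q w) = A (size u) w - A 0 w.
  by have := telescope_sumr (fun q => A q w) (leq0n (size u)); rewrite /index_iota subn0.
have eA w : dlt (u, [::]) w - dlt (Rw u, Lw u) w = A (size u) w - A 0 w.
  by rewrite /A take_size drop_size take0 drop0 /= cats0.
apply: (@inI_ext (fun w => \sum_(q <- iota 0 (size u)) (TL u q w - (A q.+1 w - A q w)))).
  by move=> w; rewrite sumrB tel LW_TL eA.
apply: inI_sum => q; rewrite mem_iota add0n => /andP[_ hq].
have [y _] : exists y : letter n m, True by case: (u) hq => [|y ?] //; exists y.
apply: (@inI_ext (fun w => match nth y u q with
  | inl i0 => dlt ((take q u ++ Rw (drop q.+1 u)) ++ [:: inl i0], Lw (drop q.+1 u) ++ [::]) w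
     - dlt ([::] ++ (take q u ++ Rw (drop q.+1 u)), [:: inl i0] ++ Lw (drop q.+1 u)) w
  | inr _ => 0 end - (A q.+1 w - A q w))).
  by move=> w; rewrite (TL_eq w y hq).
rewrite /A (take_nth y hq) (drop_nth y hq).
clear tel eA; rewrite /A; move: (take q u) (drop q.+1 u) => a r.
case: (nth y u q) => [i0|j0] /=.
  apply: inI_ext (commL (filter_all (@isR n m) r) a [::] i0 true (Lw r)).
  by move=> w; rewrite /pr -!cats1 !cats0 -!catA /=; ring.
apply: inI_ext inI0 => w; rewrite -cats1 -catA /=; ring.
Qed.


Definition TR (u : word) (q : nat) (w : key) :=
  \sum_(j <- enum 'I_m) (if nth (inr j) u q == inr j then
     dlt (Rw (drop q.+1 u) ++ [::], (take q u ++ Lw (drop q.+1 u)) ++ [:: inr j]) w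
     - dlt ([:: inr j] ++ Rw (drop q.+1 u), [::] ++ (take q u ++ Lw (drop q.+1 u))) w
   else 0).

Definition RW (u : word) (w : key) :=
  \sum_(j <- enum 'I_m)
    (ev (fun k => dlt (k.2 ++ [::], k.1 ++ [:: inr j]) w) (dr_word K j u)
     - ev (fun k => dlt ([:: inr j] ++ k.2, [::] ++ k.1) w) (dr_word K j u)).

Lemma RW_TR (u : word) (w : key) : RW u w = \sum_(q <- iota 0 (size u)) TR u q w.
Proof.
rewrite /RW /TR.
under eq_bigr => i _ do rewrite !ev_drword -sumrB big_mkcond.
by rewrite exchange_big.
Qed.

Lemma TR_eq (u : word) (q : nat) (w : key) (d : letter n m) : (q < size u)%N -> TR u q w =
  match nth d u q with
  | inr j0 => dlt (Rw (drop q.+1 u) ++ [::], (take q u ++ Lw (drop q.+1 u)) ++ [:: inr j0]) w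
     - dlt ([:: inr j0] ++ Rw (drop q.+1 u), [::] ++ (take q u ++ Lw (drop q.+1 u))) w
  | inl _ => 0 end.
Proof.
move=> hq; rewrite /TR.
under eq_bigr => i _ do rewrite (set_nth_default d _ hq).
case: (nth d u q) => [i0|j0].
  by rewrite big1.
rewrite (bigD1_seq j0) ?mem_enum ?enum_uniq //= eqxx big1 ?addr0 //.
by move=> i ne; case: eqP => // [[e]]; rewrite e eqxx in ne.
Qed.

Lemma RW_tel (u : word) :
  inI (fun w => RW u w - (dlt ([::], u) w - dlt (Rw u, Lw u) w)).
Proof.
pose A q w := dlt (Rw (drop q u), take q u ++ Lw (drop q u)) w.
have tel w : \sum_(q <- iota 0 (size u)) (A q.+1 w - A q w) = A (size u) w - A 0 w.
  by have := telescope_sumr (fun q => A q w) (leq0n (size u)); rewrite /index_iota subn0.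
have eA w : dlt ([::], u) w - dlt (Rw u, Lw u) w = A (size u) w - A 0 w.
  by rewrite /A take_size drop_size take0 drop0 /= cats0.
apply: (@inI_ext (fun w => \sum_(q <- iota 0 (size u)) (TR u q w - (A q.+1 w - A q w)))).
  by move=> w; rewrite sumrB tel RW_TR eA.
apply: inI_sum => q; rewrite mem_iota add0n => /andP[_ hq].
have [y _] : exists y : letter n m, True by case: (u) hq => [|y ?] //; exists y.
apply: (@inI_ext (fun w => match nth y u q with
  | inr j0 => dlt (Rw (drop q.+1 u) ++ [::], (take q u ++ Lw (drop q.+1 u)) ++ [:: inr j0]) w
     - dlt ([:: inr j0] ++ Rw (drop q.+1 u), [::] ++ (take q u ++ Lw (drop q.+1 u))) w
  | inl _ => 0 end - (A q.+1 w - A q w))).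
  by move=> w; rewrite (TR_eq w y hq).
rewrite /A (take_nth y hq) (drop_nth y hq).
clear tel eA; rewrite /A; move: (take q u) (drop q.+1 u) => a r.
case: (nth y u q) => [i0|j0] /=.
  apply: inI_ext inI0 => w; rewrite -cats1 -catA /=; ring.
apply: inI_ext (commR (filter_all (@isL n m) r) a [::] j0 false (Rw r)).
by move=> w; rewrite /pr -!cats1 !cats0 -!catA /=; ring.
Qed.


Lemma ev_dl F i (P : fa K n m) : ev F (dl i P) = \sum_(p <- P) p.1 * ev F (dl_word K i p.2).
Proof. by rewrite /dl ev_flatten big_map; apply: eq_bigr => p _; rewrite ev_scale. Qed.

Lemma ev_dr F j (P : fa K n m) : ev F (dr j P) = \sum_(p <- P) p.1 * ev F (dr_word K j p.2).
Proof. by rewrite /dr ev_flatten big_map; apply: eq_bigr => p _; rewrite ev_scale. Qed.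

Lemma coef_left (P : fa K n m) w :
  ften_coef (left_part P) w = \sum_(p <- P) p.1 * LW p.2 w.
Proof.
rewrite coef_ev /left_part ev_flatten big_map.
under eq_bigr => i _ do rewrite ev_sub ev_rmul ev_lmul !ev_dl -sumrB.
rewrite exchange_big; apply: eq_bigr => p _; rewrite /LW big_distrr.
by apply: eq_bigr => i _; exact: (esym (mulrBr _ _ _)).
Qed.

Lemma coef_right (P : fa K n m) w :
  ften_coef (Theta12 (right_part P)) w = \sum_(p <- P) p.1 * RW p.2 w.
Proof.
rewrite coef_ev ev_Theta /right_part ev_flatten big_map.
under eq_bigr => i _ do rewrite ev_sub ev_rmul ev_lmul !ev_dr -sumrB.
rewrite exchange_big; apply: eq_bigr => p _; rewrite /RW big_distrr.
by apply: eq_bigr => i _; exact: (esym (mulrBr _ _ _)).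
Qed.

Lemma coef_ten1 (P : fa K n m) w :
  ften_coef (ten1 P) w = \sum_(p <- P) p.1 * dlt (p.2, [::]) w.
Proof. by rewrite /ften_coef /ten1 big_map; apply: eq_bigr => p _; rewrite mulrC. Qed.

Lemma coef_oneten (P : fa K n m) w :
  ften_coef (one_ten P) w = \sum_(p <- P) p.1 * dlt ([::], p.2) w.
Proof. by rewrite /ften_coef /one_ten big_map; apply: eq_bigr => p _; rewrite mulrC. Qed.

Lemma coef_sub (s t : ften) (w : key) : ften_coef (ften_sub s t) w = ften_coef s w - ften_coef t w.
Proof. by rewrite !coef_ev ev_sub. Qed.

Lemma part1 (P : fa K n m) :
  inI (fun w => ften_coef (ften_sub (left_part P) (Theta12 (right_part P))) w
                - ften_coef (ften_sub (ten1 P) (one_ten P)) w).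
Proof.
apply: (@inI_ext (fun w => \sum_(p <- P) p.1 *
   ((LW p.2 w - (dlt (p.2, [::]) w - dlt (Rw p.2, Lw p.2) w))
    - (RW p.2 w - (dlt ([::], p.2) w - dlt (Rw p.2, Lw p.2) w))))).
  move=> w; rewrite !coef_sub coef_left coef_right coef_ten1 coef_oneten -!sumrB.
  by apply: eq_bigr => p _; ring.
apply: inI_sum => p _; apply: inIZ; apply: inIB; [exact: LW_tel | exact: RW_tel].
Qed.


Definition hr (a b : word) (h : gen) : gen :=
  let: (c, u, ij, v, w0, bb) := h in
  if bb then (c, u, ij, v ++ a, w0 ++ b, true) else (c, u, ij, v ++ b, w0 ++ a, false).
Definition hl (a b : word) (h : gen) : gen :=
  let: (c, u, ij, v, w0, bb) := h in
  if bb then (c, a ++ u, ij, v, b ++ w0, true) else (c, b ++ u, ij, v, a ++ w0, false).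

Lemma push_r a b h F : gvF (fun k => F (k.1 ++ a, k.2 ++ b)) h = gvF F (hr a b h).
Proof. by case: h => [[[[[c u] ij] v] w0] []] /=; rewrite -!catA. Qed.

Lemma push_l a b h F : gvF (fun k => F (a ++ k.1, b ++ k.2)) h = gvF F (hl a b h).
Proof. by case: h => [[[[[c u] ij] v] w0] []] /=; rewrite !catA. Qed.

Lemma coef_nil w : ften_coef ([::] : ften) w = 0.
Proof. by rewrite /ften_coef big_nil. Qed.

Lemma AA0_inI (s : ften) : AA_eq s [::] -> inI (ften_coef s).
Proof. by move=> [g hg]; exists g => w; rewrite -coef_GI -hg coef_nil subr0. Qed.

Lemma coef_Theta (s : ften) w : ften_coef (Theta12 s) w = ften_coef s (w.2, w.1).
Proof.
rewrite /ften_coef /Theta12 big_map; apply: eq_bigr => t _ /=.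
by case: w => w1 w2; case: t.2 => a b /=; rewrite !xpair_eqE andbC.
Qed.

Lemma left_inI (P : fa K n m) : (forall i, AA_eq (dl i P) [::]) ->
  inI (ften_coef (left_part P)).
Proof.
move=> h.
apply: (@inI_ext (fun w => \sum_(i <- enum 'I_n)
   (ev (fun k => dlt (k.1 ++ [:: inl i], k.2 ++ [::]) w) (dl i P)
    - ev (fun k => dlt ([::] ++ k.1, [:: inl i] ++ k.2) w) (dl i P)))).
  move=> w; rewrite [RHS]coef_ev /left_part ev_flatten [RHS]big_map.
  by apply: eq_bigr => i _; rewrite ev_sub ev_rmul ev_lmul.
apply: inI_sum => i _; apply: inIB.
  exact: (inI_push (push_r _ _) (AA0_inI (h i))).
exact: (inI_push (push_l _ _) (AA0_inI (h i))).
Qed.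

Lemma right_inI (P : fa K n m) : (forall j, AA_eq (dr j P) [::]) ->
  inI (ften_coef (right_part P)).
Proof.
move=> h.
apply: (@inI_ext (fun w => \sum_(j <- enum 'I_m)
   (ev (fun k => dlt (k.1 ++ [:: inr j], k.2 ++ [::]) w) (dr j P)
    - ev (fun k => dlt ([::] ++ k.1, [:: inr j] ++ k.2) w) (dr j P)))).
  move=> w; rewrite [RHS]coef_ev /right_part ev_flatten [RHS]big_map.
  by apply: eq_bigr => i _; rewrite ev_sub ev_rmul ev_lmul.
apply: inI_sum => i _; apply: inIB.
  exact: (inI_push (push_r _ _) (AA0_inI (h i))).
exact: (inI_push (push_l _ _) (AA0_inI (h i))).
Qed.

Definition keep (h : gen) : bool := let: (_, _, _, _, w0, b) := h in b && (w0 == [::]).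
Definition proj (h : gen) : K * word * ('I_n * 'I_m) * word :=
  let: (c, u, ij, v, _, _) := h in (c, u, ij, v).

Lemma fa_coef_gen (c : K) (u : word) (i : 'I_n) (j : 'I_m) (v u' : word) :
  fa_coef (ideal_gen (c, u, (i, j), v)) u' =
  c * ((u ++ inl i :: inr j :: v == u')%:R - (u ++ inr j :: inl i :: v == u')%:R).
Proof.
rewrite /fa_coef /ideal_gen /fa_mul /fa_scale /comm /=.
rewrite !big_cons big_nil /=; ring.
Qed.

Lemma gv_proj (h : gen) (u' : word) : gvF (dlt^~ (u', [::])) h =
  if keep h then fa_coef (ideal_gen (proj h)) u' else 0.
Proof.
case: h => [[[[[c u] [i j]] v] w0] b]; rewrite fa_coef_gen /dlt /pr.
case: b => /=; rewrite !xpair_eqE.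
  by case: w0 => [|? ?] /=; rewrite ?andbT ?andbF // subrr mulr0.
have ne x : (u ++ x :: _ == [::]) = false by case: u.
by rewrite !ne !andbF subrr mulr0.
Qed.

Lemma fa_coef_flat l u :
  fa_coef (flatten (map (@ideal_gen K n m) l)) u = \sum_(x <- l) fa_coef (ideal_gen x) u.
Proof. by rewrite /fa_coef big_flatten big_map. Qed.

Lemma proj_A F : inI F -> exists g', forall u,
  F (u, [::]) = fa_coef (flatten (map (@ideal_gen K n m) g')) u.
Proof.
move=> [g hg]; exists (map proj (filter keep g)) => u.
rewrite hg fa_coef_flat big_map big_filter [RHS]big_mkcond /=.
apply: eq_bigr => h _; rewrite gv_proj.
by case: (keep h).
Qed.

Lemma part1' (P : fa K n m) : AA_eq (ften_sub (left_part P) (Theta12 (right_part P)))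
           (ften_sub (ten1 P) (one_ten P)).
Proof.
have [g hg] := part1 P.
by exists g => w; rewrite coef_GI -hg.
Qed.

Lemma part2 (P : fa K n m) : (forall i : 'I_n, AA_eq (dl i P) [::]) ->
     (forall j : 'I_m, AA_eq (dr j P) [::]) ->
     exists c : K, A_eq P (fa_scale c (fa_one K n m)).
Proof.
move=> hl hr.
have hX : inI (ften_coef (ften_sub (left_part P) (Theta12 (right_part P)))).
  apply: (@inI_ext (fun w => ften_coef (left_part P) w
                     - ften_coef (right_part P) (w.2, w.1))).
    by move=> w; rewrite coef_sub coef_Theta.
  apply: inIB; first exact: left_inI.
  exact: (inI_swap (right_inI hr)).
have hY := inIB hX (part1 P).
have [g hg] := proj_A hY.
exists (fa_coef P [::]); exists g => u.
rewrite -hg /= subKr coef_sub.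
have -> : ften_coef (ten1 P) (u, [::]) = fa_coef P u.
  rewrite /ften_coef /ten1 big_map; apply: eq_bigr => t _ /=.
  by rewrite xpair_eqE andbT.
congr (_ - _).
rewrite /ften_coef /one_ten big_map /fa_coef /fa_scale /fa_one /= big_cons big_nil addr0 mulr1.
case: u => [|x u] /=.
  by rewrite mul1r; apply: eq_bigr => t _; rewrite xpair_eqE eqxx.
by rewrite mul0r big1 // => t _; rewrite mul0r.
Qed.


End Proof.

Theorem proposition2p13 (R : realType) (n m : nat) :
  (forall P : fa R[i] n m,
     AA_eq (ften_sub (left_part P) (Theta12 (right_part P)))
           (ften_sub (ten1 P) (one_ten P))) /\
  (forall P : fa R[i] n m,
     (forall i : 'I_n, AA_eq (dl i P) [::]) ->
     (forall j : 'I_m, AA_eq (dr j P) [::]) ->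
     exists c : R[i], A_eq P (fa_scale c (fa_one R[i] n m))).
Proof.
split; [exact: part1' | exact: part2].
Qed.
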